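(* Let $\mathbb{S}=(S,\Sigma,\{\tau_a\mid a\in L\})$ be a labelled Markov process. Then $\mathcal{R}^T(\sigma(\llbracket\mathcal{L}\rrbracket))=\mathcal{R}(\sigma(\llbracket\mathcal{L}\rrbracket))$.
   Context: A labelled Markov process (LMP) is a triple $\mathbb{S}=(S,\Sigma,\{\tau_a\mid a\in L\})$ where $(S,\Sigma)$ is a measurable space, $L$ is a countable set of labels, and each $\tau_a:S\times\Sigma\to[0,1]$ is a Markov kernel: $\tau_a(s,\cdot)$ is a subprobability measure on $\Sigma$ for every $s\in S$, and $\tau_a(\cdot,X)$ is $\Sigma$-measurable for every $X\in\Sigma$. For a family $\Gamma\subseteq\mathcal{P}(S)$, $\mathcal{R}(\Gamma)=\{(s,t)\in S\times S:\forall A\in\Gamma\ (s\in A\iff t\in A)\}$. For $\Lambda\subseteq\Sigma$, $\mathcal{R}^T(\Lambda)=\{(s,t)\in S\times S:\forall a\in L\ \forall E\in\Lambda\ \tau_a(s,E)=\tau_a(t,E)\}$. The logic $\mathcal{L}$ has formulas $\phi::=\top\mid\phi_1\wedge\phi_2\mid\langle a\rangle_{>q}\phi$ with $a\in L$ and $q\in\mathbb{Q}\cap[0,1]$, interpreted by $\llbracket\top\rrbracket=S$, $\llbracket\phi\wedge\psi\rrbracket=\llbracket\phi\rrbracket\cap\llbracket\psi\rrbracket$, $\llbracket\langle a\rangle_{>q}\phi\rrbracket=\{s\in S:\tau_a(s,\llbracket\phi\rrbracket)>q\}$ (all these sets lie in $\Sigma$). $\sigma(\llbracket\mathcal{L}\rrbracket)$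 denotes the $\sigma$-algebra generated by all sets $\llbracket\phi\rrbracket$. *)

(* Defs.v *)
From HB Require Import structures.
From mathcomp Require Import all_boot all_order all_algebra.
From mathcomp Require Import all_classical all_reals all_analysis.
Set Implicit Arguments. Unset Strict Implicit. Unset Printing Implicit Defensive.
Import Order.TTheory GRing.Theory Num.Theory.
Local Open Scope classical_set_scope.
Local Open Scope ring_scope.

Definition LMP (d : measure_display) (T : measurableType d) (R : realType)
  (L : countType) := L -> R.-spker T ~> T.

Inductive formula (L : Type) : Type :=
| FTop : formula L
| FAnd : formula L -> formula L -> formula L
| FDiam : L -> rat -> formula L -> formula L.

Fixpoint wf_formula (L : Type) (phi : formula L) : Prop :=
  match phi with
  | FTop => True
  | FAnd p1 p2 => wf_formula p1 /\ wf_formula p2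
  | FDiam _ q p => (0 <= q <= 1)%R /\ wf_formula p
  end.

Fixpoint sem d (T : measurableType d) (R : realType) (L : countType)
  (tau : LMP T R L) (phi : formula L) : set T :=
  match phi with
  | FTop => setT
  | FAnd p1 p2 => sem tau p1 `&` sem tau p2
  | FDiam a q p => [set s | ((ratr q)%:E < tau a s (sem tau p))%E]
  end.

Definition sigma_logic d (T : measurableType d) (R : realType) (L : countType)
  (tau : LMP T R L) : set (set T) :=
  <<s [set sem tau phi | phi in @wf_formula L] >>.

Definition relR (T : Type) (Gamma : set (set T)) : set (T * T) :=
  [set st | forall A, Gamma A -> (A st.1 <-> A st.2)].

Definition relRT d (T : measurableType d) (R : realType) (L : countType)
  (tau : LMP T R L) (Lambda : set (set T)) : set (T * T) :=
  [set st | forall (a : L) (E : set T), Lambda E -> tau a st.1 E = tau a st.2 E].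

(* Main.v *)
Require Import Defs.
From mathcomp Require Import all_boot all_order all_algebra.
From mathcomp Require Import all_classical all_reals all_analysis.
Import Order.TTheory GRing.Theory Num.Theory.
Local Open Scope classical_set_scope.
Local Open Scope ring_scope.

Section lmp.
Context (d : measure_display) (T : measurableType d) (R : realType)
  (L : countType) (tau : LMP T R L).

Lemma sem_meas (phi : formula L) : measurable (sem tau phi).
Proof.
elim: phi => [|p1 IH1 p2 IH2|a q p IH] /=.
- exact: measurableT.
- exact: measurableI.
- have mf := measurable_kernel (tau a) _ IH.
  have := measurable_fun_lte (f := fun _ => (ratr q)%:E) (measurable_cst _) mf
    measurableT (Y := [set true]) I.
  by rewrite setTI; congr measurable; apply/seteqP; split => x /=.
Qed.

Lemma sigma_meas A : sigma_logic tau A -> measurable A.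
Proof.
apply: smallest_sub; first exact: sigma_algebra_measurable.
by move=> _ [phi _ <-]; exact: sem_meas.
Qed.

Lemma sem_in_sigma phi : wf_formula phi -> sigma_logic tau (sem tau phi).
Proof. by move=> wf; apply: sub_gen_smallest; exists phi. Qed.

Lemma dense01 (x y : \bar R) : (0 <= x)%E -> (x <= 1)%E -> (0 <= y)%E -> (y <= 1)%E ->
  (forall q : rat, 0 <= q <= 1 -> ((ratr q)%:E < x <-> (ratr q)%:E < y)%E) -> x = y.
Proof.
move=> x0 x1 y0 y1 H.
wlog xy : x y x0 x1 y0 y1 H / (x < y)%E.
  move=> W; have [xy|yx|//] := ltgtP x y.
  - exact: W.
  - by symmetry; apply: W => // q hq; have := H q hq; tauto.
have [r xr] : exists r : R, x = r%:E.
  by case: x x0 x1 xy {H} => [r _ _ _||] //; exists r.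
have [u yu] : exists u : R, y = u%:E.
  by case: y y0 y1 xy {H} => [u _ _ _||] //; exists u.
subst x y; rewrite lte_fin in xy.
have [q /andP[rq qu]] : exists q : rat, (r < ratr q < u).
  by have [q] := rat_in_itvoo xy; rewrite in_itv /=; exists q.
have q0 : 0 <= q.
  have : (0 : R) <= ratr q by rewrite (le_trans _ (ltW rq)) // -lee_fin.
  by move=> h; rewrite -(ler_rat R) rmorph0.
have q1 : q <= 1.
  have : ratr q <= (1 : R) by rewrite (le_trans (ltW qu)) // -lee_fin.
  by move=> h; rewrite -(ler_rat R) rmorph1.
have [_ h2] := H q (introT andP (conj q0 q1)).
have : ((ratr q)%:E < u%:E)%E by rewrite lte_fin.
move/h2.
by rewrite lte_fin ltNge (ltW rq).
Qed.

Lemma kernel01 a s (E : set T) : measurable E ->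
  (0 <= tau a s E)%E /\ (tau a s E <= 1)%E.
Proof.
move=> mE; split; first exact: measure_ge0.
apply: le_trans (sprob_kernel_le1 (tau a) s).
by apply: le_measure => //; rewrite inE.
Qed.

End lmp.

Theorem lemma3p4 (d : measure_display) (T : measurableType d) (R : realType)
  (L : countType) (tau : LMP T R L) :
  relRT tau (sigma_logic tau) = relR (sigma_logic tau).
Proof.
apply/seteqP; split => -[s t] /= H.
-
  have sub : sigma_logic tau `<=` [set A | A s <-> A t].
    apply: smallest_sub.
      split => /=.
      + by [].
      + by move=> A [h1 h2]; split => -[_ hA]; split => // /=; [move/h2|move/h1].
      + move=> F hF; split => -[k _ hk]; exists k => //; exact/hF.
    move=> _ [phi wf <-] /=.
    elim: phi wf => [|p1 IH1 p2 IH2|a q p IH] /=.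
    + by [].
    + move=> [w1 w2]; have [h1 h1'] := IH1 w1; have [h2 h2'] := IH2 w2.
      by split => -[x1 x2]; split; auto.
    + move=> [_ wp]; by rewrite (H a _ (@sem_in_sigma _ _ _ _ tau _ wp)).
  by move=> A hA; exact: (sub A hA).
-
  rewrite /relRT /= => a E sE.
  pose G := [set sem tau phi | phi in @wf_formula L].
  apply: (@g_sigma_algebra_measure_unique _ _ _ G _ (fun _ => setT)) => //.
  + by move=> _ [phi _ <-]; exact: (@sem_meas _ _ _ _ tau).
  + by move=> _; exists (FTop L).
  + by rewrite bigcup_const.
  + by move=> _ _ [p1 w1 <-] [p2 w2 <-]; exists (FAnd p1 p2).
  + move=> _ [phi wf <-].
    have [hs1 hs2] := @kernel01 _ _ _ _ tau a s _ (@sem_meas _ _ _ _ tau phi).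
    have [ht1 ht2] := @kernel01 _ _ _ _ tau a t _ (@sem_meas _ _ _ _ tau phi).
    apply: dense01 => // q hq.
    exact: (H _ (@sem_in_sigma _ _ _ _ tau (FDiam a q phi) (conj hq wf))).
  + move=> _; exact: (le_lt_trans (sprob_kernel_le1 (tau a) s) (ltry _)).
Qed.
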